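(* There exists $\varepsilon_0>0$ such that for every $\varepsilon\in(0,\varepsilon_0)$ there exist constants $0<c\le C<\infty$ depending only on $\varepsilon$ such that for all $z\in\mathbb C$ with $|z|\le1-\varepsilon$ and all $\xi\in\mathbb C^+$ with $|\xi|\le\varepsilon^{-1}$, $c\le|\tilde m_\infty(\xi)|\le C$.
   Context: $\mathbb C^+=\{\operatorname{Im}\xi>0\}$. For $z\in\mathbb C$, $\tilde m_\infty(\xi)=\int\frac{d\nu(x)}{\xi-x}$ is the Stieltjes transform of the unique symmetric probability measure $\nu$ on $\mathbb R$ (depending on $z$) such that $\tilde m_\infty(\xi)(\xi-\tilde m_\infty(\xi))^2+\tilde m_\infty(\xi)(1-|z|^2)-\xi=0$ for all $\xi\in\mathbb C^+$; equivalently, $\nu$ is the limiting symmetrized empirical distribution of the singular values of $zI_n-A_n/\sqrt n$ for $A_n$ with i.i.d. standard Gaussian entries. *)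

(* Defs.v *)
From mathcomp Require Import all_boot all_order all_algebra.
From mathcomp Require Import all_classical all_reals all_analysis.
From mathcomp Require Import complex.
Set Implicit Arguments. Unset Strict Implicit. Unset Printing Implicit Defensive.
Import Order.TTheory GRing.Theory Num.Theory.
Local Open Scope ring_scope.
Local Open Scope complex_scope.
Local Open Scope classical_set_scope.

(* Stieltjes transform  S_nu(xi) = \int dnu(x) / (xi - x), written out via
   1/(xi - x) = ((a - x) - i b) / ((a - x)^2 + b^2) for xi = a + i b. *)
Definition stieltjes (R : realType) (nu : probability R R) (xi : R[i]) : R[i] :=
  let a := complex.Re xi in
  let b := complex.Im xi in
  (fine (\int[nu]_x ((a - x) / ((a - x) ^+ 2 + b ^+ 2))%:E)%E)
  +i* (fine (\int[nu]_x (- b / ((a - x) ^+ 2 + b ^+ 2))%:E)%E).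

Definition symmetric_measure (R : realType) (nu : probability R R) : Prop :=
  forall A : set R, measurable A -> nu ((fun x : R => - x) @^-1` A) = nu A.

Definition is_nu_z (R : realType) (z : R[i]) (nu : probability R R) : Prop :=
  symmetric_measure nu /\
  forall xi : R[i], 0 < complex.Im xi ->
    let m := stieltjes nu xi in
    m * (xi - m) ^+ 2 + m * (1 - `|z| ^+ 2) - xi = 0.

(* Main.v *)
Require Import Defs.
From mathcomp Require Import all_boot all_order all_algebra.
From mathcomp Require Import all_classical all_reals all_analysis.
From mathcomp Require Import complex.
From mathcomp Require Import ring lra.
Import Order.TTheory GRing.Theory Num.Theory.
Local Open Scope ring_scope.
Local Open Scope complex_scope.

Lemma Im_eq (R : realType) (u v p q a : R) :
  let m := u +i* v in let xi := p +i* q in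
  complex.Im (m * (xi - m) ^+ 2 + m * a%:C - xi) =
  v * (p^+2 - q^+2 - 4 * u * p + 3*u^+2 - v^+2 + a) + q * (2 * u * p - 2*u^+2 + 2*v^+2 - 1).
Proof.
rewrite /= !expr2 /=. ring.
Qed.

Definition N {R : realType} (x : R[i]) : R := Num.sqrt (complex.Re x ^+ 2 + complex.Im x ^+ 2).

Lemma nC (R : realType) (x : R[i]) : `|x| = (N x)%:C.
Proof. exact: normc_def. Qed.

Lemma N_ge0 (R : realType) (x : R[i]) : 0 <= N x.
Proof. exact: sqrtr_ge0. Qed.

Lemma NM (R : realType) (x y : R[i]) : N (x * y) = N x * N y.
Proof. apply: complexI; by rewrite rmorphM /= -!nC normrM. Qed.

Lemma NX (R : realType) (x : R[i]) n : N (x ^+ n) = N x ^+ n.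
Proof. apply: complexI; by rewrite rmorphXn /= -!nC normrX. Qed.

Lemma ND (R : realType) (x y : R[i]) : N (x + y) <= N x + N y.
Proof. by rewrite -lecR rmorphD /= -!nC ler_normD. Qed.

Lemma NN (R : realType) (x : R[i]) : N (- x) = N x.
Proof. apply: complexI; by rewrite -!nC normrN. Qed.

Lemma NR (R : realType) (k : R) : N k%:C = `|k|.
Proof. by rewrite /N /= expr0n addr0 sqrtr_sqr. Qed.

Lemma N2 (R : realType) (x : R[i]) : N x ^+ 2 = complex.Re x ^+ 2 + complex.Im x ^+ 2.
Proof. by rewrite /N sqr_sqrtr // addr_ge0 // sqr_ge0. Qed.
Lemma Im_stieltjes_le0 (R : realType) (nu : probability R R) (xi : R[i]) :
  0 < complex.Im xi -> complex.Im (stieltjes nu xi) <= 0.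
Proof.
move=> hq; rewrite /stieltjes /=.
apply: fine_le0.
set a := complex.Re xi; set b := complex.Im xi.
have h0 : forall x, 0 <= b / ((a - x) ^+ 2 + b ^+ 2).
  by move=> x; rewrite divr_ge0 ?addr_ge0 ?sqr_ge0 // ltW.
have -> : (\int[nu]_x ((- b / ((a - x) ^+ 2 + b ^+ 2))%:E))%E =
   (\int[nu]_x (- (b / ((a - x) ^+ 2 + b ^+ 2))%:E))%E.
  by apply: eq_integral => x _; rewrite mulNr EFinN.
rewrite integral_ge0N; last by move=> x _; rewrite lee_fin.
rewrite leeNl oppe0; apply: integral_ge0 => x _.
by rewrite lee_fin.
Qed.
Lemma arith (R : realFieldType) (eps E s t nz u v p q : R) :
  0 < eps -> eps < 1 -> E * eps = 1 -> 0 <= t -> t <= E -> 0 <= s ->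
  0 <= nz -> nz <= 1 - eps -> s ^+ 2 = u ^+ 2 + v ^+ 2 -> t ^+ 2 = p ^+ 2 + q ^+ 2 ->
  v <= 0 -> 0 < q ->
  v * (p^+2 - q^+2 - 4 * u * p + 3 * u^+2 - v^+2 + (1 - nz ^+ 2)) +
    q * (2 * u * p - 2 * u^+2 + 2 * v^+2 - 1) = 0 ->
  s ^+ 3 <= t * s ^+ 2 + t * s ^+ 2 + (t ^+ 2 + `|1 - nz ^+ 2|) * s + t ->
  t <= s * ((t + s) ^+ 2 + `|1 - nz ^+ 2|) ->
  eps / 4 / ((E + 1) ^+ 2 + 1) <= s <= E ^+ 2 + 3 * E + 2.
Proof.
move=> e0 e1 hE t0 tE s0 nz0 nz1 hs ht hv hq hIm hU hL.
set a := 1 - nz ^+ 2 in hIm hU hL.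
have E1 : 1 < E by nra.
have a0 : eps <= a by rewrite /a; nra.
have a1 : a <= 1 by rewrite /a; nra.
have aa : `|a| = a by rewrite ger0_norm //; lra.
rewrite aa in hU hL.
set K := (E + 1) ^+ 2 + 1.
have K1 : 1 <= K by rewrite /K; nra.
have K0 : 0 < K by lra.
apply/andP; split.
  rewrite ler_pdivrMr //.
  have [s1|s1] := lerP 1 s.
    nra.
  have [td|td] := lerP t (eps / 4).
    have [sd|sd] := lerP (eps / 4) s; first by nra.
    exfalso.
    have hu : u ^+ 2 <= s ^+ 2 by nra.
    have hv2 : v ^+ 2 <= s ^+ 2 by nra.
    have hp : p ^+ 2 <= t ^+ 2 by nra.
    have hq2 : q ^+ 2 <= t ^+ 2 by nra.
    have hs2 : s ^+ 2 <= eps ^+ 2 / 16 by nra.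
    have ht2 : t ^+ 2 <= eps ^+ 2 / 16 by nra.
    have hup : 2 * u * p <= u ^+ 2 + p ^+ 2 by have := sqr_ge0 (u - p); rewrite sqrrB; lra.
    have hup' : - (u ^+ 2 + p ^+ 2) <= 2 * u * p by have := sqr_ge0 (u + p); rewrite sqrrD; lra.
    have ee : eps ^+ 2 < eps by nra.
    have RA : 0 < p^+2 - q^+2 - 4 * u * p + 3 * u^+2 - v^+2 + a.
      have : 4 * u * p <= 2 * (u ^+ 2 + p ^+ 2) by lra.
      lra.
    have RB : 2 * u * p - 2 * u^+2 + 2 * v^+2 - 1 < 0 by nra.
    nra.
  have : t <= s * K.
    apply: (le_trans hL); apply: ler_wpM2l => //.
    rewrite /K; have : t + s <= E + 1 by lra.
    nra.
  nra.
have [s1|s1] := lerP s 1; first by nra.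
have ss : s <= s ^+ 2 by nra.
have h1 : (t ^+ 2 + a) * s <= (t ^+ 2 + 1) * s ^+ 2.
  apply: ler_pM; nra.
have h2 : t <= t * s ^+ 2 by nra.
have : s ^+ 3 <= (t ^+ 2 + 3 * t + 1) * s ^+ 2 by lra.
move=> h.
have : s <= t ^+ 2 + 3 * t + 1.
  have s2 : 0 < s ^+ 2 by nra.
  by rewrite exprS ler_pM2r in h.
nra.
Qed.

Arguments Im_stieltjes_le0 {R} nu {xi}.
Arguments Im_eq {R}.
Arguments arith {R eps E s t nz u v p q}.
Arguments N_ge0 {R}.
Arguments N2 {R}.
Arguments NM {R}.
Arguments NX {R}.
Arguments ND {R}.
Arguments NN {R}.
Arguments NR {R}.
Arguments nC {R}.

Theorem lemma7p8 (R : realType) :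
  exists eps0 : R, 0 < eps0 /\
  forall eps : R, 0 < eps < eps0 ->
  exists c C : R, 0 < c /\ c <= C /\
  forall (z xi : R[i]) (nu : probability R R),
    `|z| <= (1 - eps)%:C ->
    0 < complex.Im xi ->
    `|xi| <= (eps^-1)%:C ->
    is_nu_z z nu ->
    c%:C <= `|stieltjes nu xi| <= C%:C.
Proof.
exists 1; split; first exact: ltr01.
move=> eps /andP[e0 e1].
set E := eps^-1.
have hE : E * eps = 1 by rewrite /E mulVf // gt_eqF.
have E1 : 1 < E by nra.
set K := (E + 1) ^+ 2 + 1.
have K1 : 1 <= K by rewrite /K; nra.
exists (eps / 4 / K), (E ^+ 2 + 3 * E + 2).
split; first by rewrite divr_gt0 // ?divr_gt0 //; lra.
split.
  apply: (@le_trans _ _ 1); last by nra.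
  rewrite ler_pdivrMr; last by lra.
  nra.
move=> z xi nu hz hq hxi [_ Heq].
have Eq := Heq xi hq; rewrite /= in Eq.
have hv := Im_stieltjes_le0 nu hq.
move: (stieltjes nu xi) hv Eq => m hv Eq.
rewrite nC lecR in hz; rewrite nC lecR in hxi.
rewrite nC !lecR.
set a := 1 - N z ^+ 2.
have Ea : 1 - `|z| ^+ 2 = a%:C by rewrite nC /a rmorphB rmorph1 rmorphXn.
rewrite Ea in Eq.
have Hm3 : m ^+ 3 = xi * m ^+ 2 + xi * m ^+ 2 - (xi ^+ 2 + a%:C) * m + xi.
  apply/eqP; rewrite -subr_eq0 -[X in _ == X]Eq; apply/eqP; ring.
have Hx : xi = m * ((xi - m) ^+ 2 + a%:C).
  apply/eqP; rewrite eq_sym -subr_eq0 -[X in _ == X]Eq; apply/eqP; ring.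
have U1 : N m ^+ 3 <= N xi * N m ^+ 2 + N xi * N m ^+ 2 + (N xi ^+ 2 + `|a|) * N m + N xi.
  rewrite -NX Hm3.
  apply: (le_trans (ND _ _)); apply: lerD; last done.
  apply: (le_trans (ND _ _)); apply: lerD.
    by apply: (le_trans (ND _ _)); rewrite !NM expr2.
  rewrite NN NM; apply: ler_wpM2r; first exact: N_ge0.
  by apply: (le_trans (ND _ _)); rewrite NX NR.
have L1 : N xi <= N m * ((N xi + N m) ^+ 2 + `|a|).
  rewrite {1}Hx NM; apply: ler_wpM2l; first exact: N_ge0.
  apply: (le_trans (ND _ _)); rewrite NX NR; apply: lerD => //.
  have h1 : N (xi - m) <= N xi + N m by apply: (le_trans (ND _ _)); rewrite NN.
  have h0 := N_ge0 (xi - m).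
  nra.
have em : m = (complex.Re m) +i* (complex.Im m) by case: (m).
have ex : xi = (complex.Re xi) +i* (complex.Im xi) by case: (xi).
have HIm := Im_eq (complex.Re m) (complex.Im m) (complex.Re xi) (complex.Im xi) a.
rewrite -em -ex in HIm; cbv zeta in HIm; rewrite Eq in HIm.
have HIm' : complex.Im m *
    (complex.Re xi ^+ 2 - complex.Im xi ^+ 2 -
     4 * complex.Re m * complex.Re xi + 3 * complex.Re m ^+ 2 -
     complex.Im m ^+ 2 + a) +
    complex.Im xi *
    (2 * complex.Re m * complex.Re xi - 2 * complex.Re m ^+ 2 +
     2 * complex.Im m ^+ 2 - 1) = 0 by rewrite -HIm.
have key := arith e0 e1 hE (N_ge0 xi) hxi (N_ge0 m) (N_ge0 z) hz (N2 m) (N2 xi) hv hq HIm' U1 L1.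
exact: key.
Qed.
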